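(* Let $\nu\in\mathbb{N}$, let $(X,d)$ be a $\nu$-generalized metric space, and let $\{x_n\}_{n\in\mathbb{N}}$ be a sequence in $X$ whose terms are pairwise distinct and such that $d(x_n,x_{n+1})+d(x_n,x_{n+2})\to0$ as $n\to\infty$. Let $m:X\times X\to[0,\infty)$ be a function such that for any two subsequences $\{x_{p_i}\}$ and $\{x_{q_i}\}$ of $\{x_n\}$, $$\limsup_{i\to\infty} m(x_{p_i},x_{q_i})\le\limsup_{i\to\infty} d(x_{p_i},x_{q_i}).$$ Suppose that for every $\epsilon>0$ and any two subsequences $\{x_{p_i}\}$ and $\{x_{q_i}\}$, if $\limsup_{i\to\infty} m(x_{p_i},x_{q_i})\le\epsilon$, then there is $N$ such that $d(x_{p_i+1},x_{q_i+1})\le\epsilon$ for all $i\ge N$. Then $\{x_n\}$ is Cauchy.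
   Context: Let $X$ be a nonempty set, $d:X\times X\to[0,\infty)$, and $\nu\in\mathbb{N}$. $(X,d)$ is a $\nu$-generalized metric space if: (1) $d(x,y)=0$ iff $x=y$; (2) $d(x,y)=d(y,x)$ for all $x,y$; (3) $d(x,y)\le d(x,u_1)+d(u_1,u_2)+\dots+d(u_\nu,y)$ for every set $\{x,u_1,\dots,u_\nu,y\}$ of $\nu+2$ pairwise distinct elements of $X$. A sequence $\{x_n\}$ in $X$ is Cauchy if $\lim_{n\to\infty}\sup\{d(x_n,x_{n+1+m}): m\in\mathbb{Z}^+\}=0$, where $\mathbb{Z}^+$ denotes the nonnegative integers. A subsequence $\{x_{p_i}\}$ means $p_1<p_2<\cdots$ in $\mathbb{N}$. *)

(* Defs.v *)
From Stdlib Require Import Reals Lra.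
Open Scope R_scope.

(* Axiom (3) of a nu-generalized metric space: for every family
   p 0 = x, p 1 = u_1, ..., p nu = u_nu, p (nu+1) = y of nu+2 pairwise
   distinct points, d x y <= d(x,u_1) + ... + d(u_nu,y). *)
Definition gen_triangle {X : Type} (nu : nat) (d : X -> X -> R) : Prop :=
  forall p : nat -> X,
    (forall i j, (i <= S nu)%nat -> (j <= S nu)%nat -> i <> j -> p i <> p j) ->
    d (p 0%nat) (p (S nu)) <= sum_f_R0 (fun i => d (p i) (p (S i))) nu.

Definition gen_metric_space {X : Type} (nu : nat) (d : X -> X -> R) : Prop :=
  (forall x y, 0 <= d x y) /\
  (forall x y, d x y = 0 <-> x = y) /\
  (forall x y, d x y = d y x) /\
  gen_triangle nu d.

(* Cauchy: lim_{n->oo} sup { d(x_n, x_{n+1+m}) : m >= 0 } = 0,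
   written out with epsilon/N (the sup may be +oo for small n). *)
Definition gm_cauchy {X : Type} (d : X -> X -> R) (x : nat -> X) : Prop :=
  forall eps, 0 < eps -> exists N : nat, forall n k : nat, (N <= n)%nat ->
    d (x n) (x (n + 1 + k)%nat) <= eps.

Definition subseq_idx (p : nat -> nat) : Prop := forall i, (p i < p (S i))%nat.

(* Extended reals and limsup (as a relation; limsup always exists and is unique). *)
Inductive ER : Type := Fin (r : R) | PInf | MInf.

Definition ER_le (a b : ER) : Prop :=
  match a, b with
  | MInf, _ => True
  | _, PInf => True
  | Fin r, Fin s => r <= s
  | _, _ => False
  end.

Definition is_limsup (u : nat -> R) (L : ER) : Prop :=
  match L with
  | Fin l =>
      (forall eps, 0 < eps -> exists N : nat, forall i, (N <= i)%nat -> u i < l + eps) /\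
      (forall eps, 0 < eps -> forall N : nat, exists i, (N <= i)%nat /\ l - eps < u i)
  | PInf => forall M : R, forall N : nat, exists i, (N <= i)%nat /\ M < u i
  | MInf => forall M : R, exists N : nat, forall i, (N <= i)%nat -> u i < M
  end.

(* Main.v *)
Require Import Defs.
From Stdlib Require Import Reals Lra Lia Classical ClassicalEpsilon Wf_nat.
From Coquelicot Require Import Coquelicot.
Open Scope R_scope.

Definition zz (M t : nat) : nat := if Nat.leb (2*t) M then (2*t)%nat else (2*(M-t)+1)%nat.

Lemma zz_le M t : (t <= M)%nat -> (zz M t <= M)%nat.
Proof. unfold zz; destruct (Nat.leb_spec (2*t) M); lia. Qed.
Lemma zz_inj M t s : (t <= M)%nat -> (s <= M)%nat -> zz M t = zz M s -> t = s.
Proof. unfold zz; destruct (Nat.leb_spec (2*t) M); destruct (Nat.leb_spec (2*s) M); lia. Qed.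
Lemma zz_0 M : zz M 0 = 0%nat.
Proof. unfold zz; destruct (Nat.leb_spec (2*0) M); lia. Qed.
Lemma zz_M M : (1 <= M)%nat -> zz M M = 1%nat.
Proof. unfold zz; destruct (Nat.leb_spec (2*M) M); lia. Qed.
Lemma zz_step M t : (t < M)%nat ->
  (zz M (S t) = zz M t + 1 \/ zz M (S t) = zz M t + 2 \/
   zz M t = zz M (S t) + 1 \/ zz M t = zz M (S t) + 2)%nat.
Proof. unfold zz; destruct (Nat.leb_spec (2*t) M); destruct (Nat.leb_spec (2*S t) M); lia. Qed.

Lemma least_nat (P : nat -> Prop) n : P n -> exists m, P m /\ forall k, (k < m)%nat -> ~ P k.
Proof.
  induction n as [n IH] using (well_founded_induction lt_wf); intros Hn.
  destruct (classic (exists k, (k < n)%nat /\ P k)) as [[k [Hk Pk]]|Hno].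
  - exact (IH k Hk Pk).
  - exists n; split; auto. intros k Hk Pk; apply Hno; eauto.
Qed.

Definition toER (l : Rbar) : ER :=
  match l with Finite r => Fin r | p_infty => PInf | m_infty => MInf end.

Lemma limsup_ex (u : nat -> R) : exists L, is_limsup u L.
Proof.
  destruct (ex_LimSup_seq u) as [l Hl]. exists (toER l).
  destruct l as [r| |]; simpl in *; auto.
  split.
  - intros e He. destruct (Hl (mkposreal e He)) as [_ [N HN]]. exists N. exact HN.
  - intros e He N. destruct (Hl (mkposreal e He)) as [H _]. exact (H N).
Qed.

Definition good {X : Type} (d : X -> X -> R) (x : nat -> X) (eps : R) (i B : nat)
  (pq : nat * nat) : Prop :=
  (B <= fst pq)%nat /\ (fst pq < snd pq)%nat /\
  d (x (fst pq)) (x (snd pq)) <= eps + / (INR i + 1) /\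
  eps < d (x (S (fst pq))) (x (S (snd pq))).

Theorem theorem2p3 (X : Type) (nu : nat) (d m : X -> X -> R) (x : nat -> X) :
  (1 <= nu)%nat ->
  gen_metric_space nu d ->
  (forall i j : nat, i <> j -> x i <> x j) ->
  Un_cv (fun n => d (x n) (x (S n)) + d (x n) (x (S (S n)))) 0 ->
  (forall a b, 0 <= m a b) ->
  (forall p q : nat -> nat, subseq_idx p -> subseq_idx q ->
     forall L1 L2 : ER,
       is_limsup (fun i => m (x (p i)) (x (q i))) L1 ->
       is_limsup (fun i => d (x (p i)) (x (q i))) L2 ->
       ER_le L1 L2) ->
  (forall eps : R, 0 < eps ->
     forall p q : nat -> nat, subseq_idx p -> subseq_idx q ->
     forall L : ER, is_limsup (fun i => m (x (p i)) (x (q i))) L ->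
       ER_le L (Fin eps) ->
       exists N : nat, forall i : nat, (N <= i)%nat ->
         d (x (S (p i))) (x (S (q i))) <= eps) ->
  gm_cauchy d x.
Proof.
  intros Hnu [Hd0 [Hd1 [Hsym Htri]]] Hinj Hcv Hm0 H1 H2.
  intros eps Heps. apply NNPP; intro Hno.
  assert (Hbad : forall N, exists n k, (N <= n)%nat /\ eps < d (x n) (x (n+1+k)%nat)).
  { intro N. apply NNPP; intro H. apply Hno; exists N; intros n k Hn.
    apply Rnot_lt_le; intro Hl; apply H; eauto. }
  assert (Hsmall : forall eta, 0 < eta -> exists N0, forall u v, (N0 <= u)%nat -> (N0 <= v)%nat ->
     (v = S u \/ v = S (S u) \/ u = S v \/ u = S (S v)) -> d (x u) (x v) < eta).
  { intros eta Heta. destruct (Hcv eta Heta) as [N0 HN0]. exists N0.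
    assert (Hk : forall u, (N0 <= u)%nat -> d (x u) (x (S u)) < eta /\ d (x u) (x (S (S u))) < eta).
    { intros u Hu. specialize (HN0 u Hu). unfold R_dist in HN0.
      rewrite Rminus_0_r in HN0. apply Rabs_def2 in HN0 as [HN0 _].
      pose proof (Hd0 (x u) (x (S u))). pose proof (Hd0 (x u) (x (S (S u)))). lra. }
    intros u v Hu Hv [E|[E|[E|E]]]; subst.
    - apply Hk; auto.
    - apply Hk; auto.
    - rewrite Hsym; apply Hk; auto.
    - rewrite Hsym; apply Hk; auto. }
  assert (Hpair : forall i B, exists pq, good d x eps i B pq).
  { intros i B.
    set (eta := / ((INR i + 1) * INR nu)).
    assert (Hnu0 : 0 < INR nu) by (apply lt_0_INR; lia).
    assert (Hi0 : 0 < INR i + 1) by (pose proof (pos_INR i); lra).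
    assert (Heta : 0 < eta) by (unfold eta; apply Rinv_0_lt_compat; nra).
    destruct (Hsmall eta Heta) as [N0 HN0].
    destruct (Hsmall eps Heps) as [N1 HN1].
    destruct (Hbad (N0 + N1 + B + nu + 1)%nat) as [n [k [Hn Hd]]].
    destruct (least_nat (fun j => (n < j)%nat /\ eps < d (x n) (x j)) (n+1+k)%nat)
      as [b [[Hnb Hb] Hmin]].
    { split; [lia|exact Hd]. }
    assert (Hb2 : (n + 2 <= b)%nat).
    { destruct (Nat.eq_dec b (S n)) as [E|E]; [|lia]. subst b.
      specialize (HN1 n (S n) ltac:(lia) ltac:(lia) ltac:(auto)). lra. }
    exists ((n - 1)%nat, (b - 1)%nat). unfold good; simpl.
    replace (S (n - 1)) with n by lia. replace (S (b - 1)) with b by lia.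
    split; [lia|]. split; [lia|]. split; [|exact Hb].
    assert (Hbig : d (x (b - 1)%nat) (x n) <= eps).
    { rewrite Hsym. apply Rnot_lt_le; intro Hl. apply (Hmin (b-1)%nat); [lia|split; [lia|exact Hl]]. }
    set (p := fun t => match t with O => x (b - 1)%nat | S t => x (n - zz nu t)%nat end).
    assert (Hdist : forall i j, (i <= S nu)%nat -> (j <= S nu)%nat -> i <> j -> p i <> p j).
    { intros [|t] [|s] Hi Hj Hij; simpl; try congruence.
      - apply Hinj. pose proof (zz_le nu s); lia.
      - apply Hinj. pose proof (zz_le nu t); lia.
      - apply Hinj. intro E. apply Hij. f_equal. apply (zz_inj nu); try lia.
        pose proof (zz_le nu t); pose proof (zz_le nu s); lia. }
    specialize (Htri p Hdist). simpl in Htri. rewrite zz_M in Htri by lia.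
    rewrite decomp_sum in Htri by lia. simpl in Htri. rewrite zz_0, Nat.sub_0_r in Htri.
    assert (Hs : sum_f_R0 (fun i0 : nat => d (p (S i0)) (p (S (S i0)))) (Init.Nat.pred nu)
                 <= sum_f_R0 (fun _ => eta) (Init.Nat.pred nu)).
    { apply sum_Rle. intros t Ht. simpl. apply Rlt_le. apply HN0.
      - pose proof (zz_le nu t); lia.
      - pose proof (zz_le nu (S t)); lia.
      - pose proof (zz_le nu t); pose proof (zz_le nu (S t)); pose proof (zz_step nu t); lia. }
    rewrite sum_cte in Hs. replace (S (Init.Nat.pred nu)) with nu in Hs by lia.
    assert (Heq : eta * INR nu = / (INR i + 1)).
    { unfold eta. field. lra. }
    rewrite Hsym. simpl in Hs. lra. }
  assert (HF : forall i B, {pq | good d x eps i B pq}).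
  { intros i B. apply constructive_indefinite_description. apply Hpair. }
  set (pr := fix pr (i : nat) : nat * nat :=
         match i with O => proj1_sig (HF O O) | S i => proj1_sig (HF (S i) (S (snd (pr i)))) end).
  assert (Hpr : forall i, good d x eps i (match i with O => O | S j => S (snd (pr j)) end) (pr i)).
  { intros [|i]; simpl; apply proj2_sig. }
  set (P := fun i => fst (pr i)). set (Q := fun i => snd (pr i)).
  assert (HP : subseq_idx P).
  { intro i. unfold P. destruct (Hpr i) as [_ [A _]]. destruct (Hpr (S i)) as [B _]. change (S (snd (pr i)) <= fst (pr (S i)))%nat in B. lia. }
  assert (HQ : subseq_idx Q).
  { intro i. unfold Q. destruct (Hpr i) as [_ [A0 _]]. destruct (Hpr (S i)) as [B [A _]]. change (S (snd (pr i)) <= fst (pr (S i)))%nat in B. lia. }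
  destruct (limsup_ex (fun i => m (x (P i)) (x (Q i)))) as [L1 HL1].
  destruct (limsup_ex (fun i => d (x (P i)) (x (Q i)))) as [L2 HL2].
  pose proof (H1 P Q HP HQ L1 L2 HL1 HL2) as H12.
  assert (Hub : forall i, d (x (P i)) (x (Q i)) <= eps + / (INR i + 1)).
  { intro i. destruct (Hpr i) as [_ [_ [A _]]]. exact A. }
  assert (Hub1 : forall i, / (INR i + 1) <= 1).
  { intro i. pose proof (pos_INR i). rewrite <- Rinv_1. apply Rinv_le_contravar; lra. }
  assert (H2e : ER_le L2 (Fin eps)).
  { destruct L2 as [l| |]; simpl in *; auto.
    - apply Rnot_lt_le; intro Hl.
      destruct HL2 as [_ HL2].
      destruct (archimed_cor1 ((l - eps)/2) ltac:(lra)) as [N [HN HN0]].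
      destruct (HL2 ((l - eps)/2) ltac:(lra) N) as [i [Hi Hu]].
      specialize (Hub i).
      assert (/ (INR i + 1) <= / INR N).
      { apply Rinv_le_contravar. apply lt_0_INR; lia. apply le_INR in Hi. lra. }
      lra.
    - destruct (HL2 (eps + 1) O) as [i [_ Hi]]. specialize (Hub i); specialize (Hub1 i). lra. }
  assert (H1e : ER_le L1 (Fin eps)).
  { destruct L1, L2; simpl in *; try tauto; lra. }
  destruct (H2 eps Heps P Q HP HQ L1 HL1 H1e) as [N HN].
  specialize (HN N (le_n N)). destruct (Hpr N) as [_ [_ [_ A]]]. unfold P, Q in HN. lra.
Qed.
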